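(* Suppose the event $\xi_n$ occurs, let $t\in\{K+1,\dots,n\}$, and let $A_t$ be the action taken by the algorithm in round $t$. Then $$\mu(a^* )-\mu(A_t)\le 2c_t(A_t)+2c_t(a^* ).$$
   Context: $K$-armed bandit: actions $a\in[K]$ with unknown mean rewards $\mu(a)$; optimal action $a^*=\arg\max_a\mu(a)$. In each round the learner takes $A_t$ and observes reward $Y_t$ with mean $\mu(A_t)$. Notation: $T_t(a)=\sum_{s=1}^{t-1}\mathbb{1}\{A_s=a\}$; $\hat\mu_t(a)=T_t(a)^{-1}\sum_{s=1}^{t-1}\mathbb{1}\{A_s=a\}Y_s$; for fixed $\delta\in(0,1)$, $c_t(a)=\sqrt{2\log(1/\delta)/T_t(a)}$; $U_t(a)=\hat\mu_t(a)+c_t(a)$, $L_t(a)=\hat\mu_t(a)-c_t(a)$. Algorithm: in rounds $1,\dots,K$ take each action once; in each round $t\ge K+1$ take $A_t\in\arg\max_{a\in\tilde A_t}1/T_t(a)$ where $\tilde A_t=\{a\in[K]:U_t(a)\ge\max_{a'\in[K]}L_t(a')\}$ (ties broken arbitrarily). Event $\xi_n=\bigcap_{a\in[K]}\bigcap_{t=K+1}^n\{|\hat\mu_t(a)-\mu(a)|\le c_t(a)\}$. *)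

(* Defs.v *)
From mathcomp Require Import all_boot all_order all_algebra.
From mathcomp Require Import all_classical all_reals all_analysis.
Set Implicit Arguments. Unset Strict Implicit. Unset Printing Implicit Defensive.
Import Order.TTheory GRing.Theory Num.Theory.
Local Open Scope ring_scope.

(* Rounds are indexed by t = 1, 2, ...; [A t : 'I_K] is the action taken in
   round t and [Y t] the observed reward in round t. *)
Section Bandit.
Variables (R : realType) (K : nat) (A : nat -> 'I_K) (Y : nat -> R) (delta : R).

Definition Tcount (t : nat) (a : 'I_K) : nat :=
  (\sum_(1 <= s < t) (A s == a))%N.

Definition muhat (t : nat) (a : 'I_K) : R :=
  (Tcount t a)%:R^-1 * \sum_(1 <= s < t) ((A s == a)%:R * Y s).

Definition conf (t : nat) (a : 'I_K) : R :=
  Num.sqrt (2 * ln (1 / delta) / (Tcount t a)%:R).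

Definition Ucb (t : nat) (a : 'I_K) : R := muhat t a + conf t a.
Definition Lcb (t : nat) (a : 'I_K) : R := muhat t a - conf t a.

Definition in_tildeA (t : nat) (a : 'I_K) : Prop :=
  forall a' : 'I_K, Lcb t a' <= Ucb t a.

Definition algorithm_run : Prop :=
  (forall a : 'I_K, Tcount K.+1 a = 1%N) /\
  (forall t : nat, (K.+1 <= t)%N ->
     in_tildeA t (A t) /\
     forall a : 'I_K, in_tildeA t a -> (Tcount t a)%:R^-1 <= (Tcount t (A t))%:R^-1 :> R).

Definition xi (mu : 'I_K -> R) (n : nat) : Prop :=
  forall (a : 'I_K) (t : nat), (K.+1 <= t <= n)%N -> `|muhat t a - mu a| <= conf t a.

End Bandit.

(* Main.v *)
Require Import Defs.
From mathcomp Require Import all_boot all_order all_algebra.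
From mathcomp Require Import all_classical all_reals all_analysis.
From mathcomp Require Import lra.
Import Order.TTheory GRing.Theory Num.Theory.
Local Open Scope ring_scope.

Theorem lemma2 (R : realType) (K : nat) (mu : 'I_K -> R) (astar : 'I_K)
  (A : nat -> 'I_K) (Y : nat -> R) (delta : R) (n t : nat) :
  0 < delta < 1 ->
  (forall a : 'I_K, mu a <= mu astar) ->
  algorithm_run A Y delta ->
  xi A Y delta mu n ->
  (K.+1 <= t <= n)%N ->
  mu astar - mu (A t) <= 2 * conf A delta t (A t) + 2 * conf A delta t astar.
Proof.
move=> _ _ [_ Halg] Hxi Ht.
have Kt : (K.+1 <= t)%N by case/andP: Ht.
have [Htil _] := Halg t Kt.
have H1 := Htil astar.
have H2 := Hxi astar t Ht.
have H3 := Hxi (A t) t Ht.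
move: H1 H2 H3; rewrite /Lcb /Ucb !ler_norml.
move: (muhat A Y t astar) (muhat A Y t (A t)) (conf A delta t astar) (conf A delta t (A t)) (mu astar) (mu (A t)).
move=> m1 m2 c1 c2 u1 u2 H1 /andP[H2a H2b] /andP[H3a H3b].
lra.
Qed.
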